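(* Let $u\equiv 0\pmod{12}$ and $v\equiv 2,4\pmod 6$. Then $\Phi(u\times v,4,2)\le\left\lfloor\frac{u}{4}\left(\left\lfloor\frac{uv-1}{3}\left\lfloor\frac{uv-2}{2}\right\rfloor\right\rfloor-1\right)\right\rfloor-1$.
   Context: A 2-D $(u\times v,4,2)$-OOC is a family $\mathcal C$ of $u\times v$ $(0,1)$-matrices of Hamming weight $4$ such that for all $A=(a_{ij}),B=(b_{ij})\in\mathcal C$ and integers $r$ with $A\ne B$ or $r\not\equiv0\pmod v$, $\sum_{i,j}a_{ij}b_{i,j+r}\le 2$ (column indices mod $v$). $\Phi(u\times v,4,2)$ is the largest size of such a code. *)

(* Defs.v *)
From HB Require Import structures.
From mathcomp Require Import all_boot all_order all_algebra.
Set Implicit Arguments. Unset Strict Implicit. Unset Printing Implicit Defensive.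

(* Column index j shifted cyclically by r, i.e. (j + r) mod v.
   (insubd is only a totality device: for v > 0 the value is always in range.) *)
Definition col_shift (v : nat) (j : 'I_v) (r : nat) : 'I_v :=
  insubd j ((j + r) %% v).

Definition hweight (u v : nat) (A : 'M[bool]_(u, v)) : nat :=
  \sum_(i < u) \sum_(j < v) (A i j : nat).

Definition corr (u v : nat) (A B : 'M[bool]_(u, v)) (r : nat) : nat :=
  \sum_(i < u) \sum_(j < v) ((A i j && B i (col_shift j r)) : nat).

(* C is a 2-D (u x v, 4, 2)-OOC.  Integer shifts r are represented by
   natural numbers r (every residue mod v is attained); r = 0 mod v
   iff r %% v == 0. *)
Definition is_OOC (u v : nat) (C : {set 'M[bool]_(u, v)}) : bool :=
  [forall A in C, hweight A == 4] &&
  [forall A in C, forall B in C, forall r : 'I_v,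
     ((A != B) || (r %% v != 0)) ==> (corr A B r <= 2)].

Definition Phi (u v : nat) : nat :=
  \max_(C : {set 'M[bool]_(u, v)} | is_OOC C) #|C|.

(* Main.v *)
Require Import Defs.
From mathcomp Require Import all_boot all_order all_algebra.
From mathcomp Require Import zify.
Set Implicit Arguments. Unset Strict Implicit. Unset Printing Implicit Defensive.

Section Shift.
Variable v : nat.
Implicit Types (j : 'I_v).

Lemma cs_val j r : val (col_shift j r) = (j + r) %% v.
Proof. rewrite /col_shift insubdK //. apply: ltn_pmod. exact: (leq_ltn_trans (leq0n j) (ltn_ord j)). Qed.

Lemma cs_add j a b : col_shift (col_shift j a) b = col_shift j (a + b).
Proof. apply: val_inj; rewrite !cs_val modnDml addnA. by []. Qed.

Lemma cs_mod j r : col_shift j (r %% v) = col_shift j r.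
Proof. apply: val_inj; rewrite !cs_val modnDmr. by []. Qed.

Lemma cs_v j : col_shift j v = j.
Proof. apply: val_inj; rewrite !cs_val modnDr modn_small //. Qed.

Lemma cs_inj a : injective (fun j => col_shift j a).
Proof. move=> j k /(congr1 val); rewrite !cs_val => /eqP. rewrite eqn_modDr !modn_small // => /eqP H; exact: val_inj. Qed.
End Shift.

Lemma sumbP (T : finType) (P : pred T) (f : pred T) :
  \sum_(k | P k) (f k : nat) = #|[set k | P k && f k]|.
Proof.
rewrite -sum1_card [RHS]big_mkcond [LHS]big_mkcond /=; apply: eq_bigr => k _.
rewrite !inE; by case: (P k); case: (f k).
Qed.

Lemma sum_subP (T : finType) (P Q : pred T) (F : T -> nat) :
  (forall i, Q i -> P i) -> \sum_(i | Q i) F i <= \sum_(i | P i) F i.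
Proof.
move=> QP; rewrite [X in _ <= X](bigID Q) /=.
rewrite (eq_bigl (fun i => P i && Q i)); first exact: leq_addr.
move=> i /=; case Qi: (Q i); last by rewrite andbF.
by rewrite (QP _ Qi).
Qed.

Lemma sum_constP (T : finType) (Q : pred T) (c : nat) :
  \sum_(k | Q k) c = #|[set k | Q k]| * c.
Proof. rewrite -sum1dep_card big_distrl; apply: eq_bigr => *; exact: (esym (mul1n c)). Qed.

Lemma card4 (T : finType) (a b c d : T) : a != b -> a != c -> a != d ->
  b != c -> b != d -> c != d -> #|a |: (b |: (c |: [set d]))| = 4.
Proof.
move=> ab ac ad bc bd cd.
by rewrite !cardsU1 cards1 !in_setU1 !in_set1 (negbTE ab) (negbTE ac) (negbTE ad)
  (negbTE bc) (negbTE bd) (negbTE cd).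
Qed.

Lemma card5 (T : finType) (a b c d e : T) : a != b -> a != c -> a != d -> a != e ->
  b != c -> b != d -> b != e -> c != d -> c != e -> d != e ->
  #|a |: (b |: (c |: (d |: [set e])))| = 5.
Proof.
move=> ab ac ad ae bc bd be cd ce de.
by rewrite !cardsU1 cards1 !in_setU1 !in_set1 (negbTE ab) (negbTE ac) (negbTE ad)
  (negbTE ae) (negbTE bc) (negbTE bd) (negbTE be) (negbTE cd) (negbTE ce) (negbTE de).
Qed.

Section Code.
Variables (u v : nat) (C : {set 'M[bool]_(u, v)}).
Hypothesis HC : is_OOC C.

Definition P := ('I_u * 'I_v)%type.
Definition Kt := ('M[bool]_(u, v) * 'I_v)%type.
Definition sh (p : P) (s : nat) : P := (p.1, col_shift p.2 s).
Definition inb (p : P) (k : Kt) : bool := k.1 p.1 (col_shift p.2 k.2).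
Definition blk : {set Kt} := [set k | k.1 \in C].

Lemma sh_inj s : injective (fun p => sh p s).
Proof. move=> [i j] [i' j'] [-> /cs_inj ->] //. Qed.

Lemma sh_add p a b : sh (sh p a) b = sh p (a + b).
Proof. by rewrite /sh /= cs_add. Qed.

Lemma hweight_card A : hweight A = #|[set p : P | A p.1 p.2]|.
Proof. rewrite /hweight pair_bigA /= sumbP; apply: eq_card => p; by rewrite !inE. Qed.

Lemma corr_card A B r : corr A B r = #|[set p : P | A p.1 p.2 && B p.1 (col_shift p.2 r)]|.
Proof. rewrite /corr pair_bigA /= sumbP; apply: eq_card => p; by rewrite !inE. Qed.

Lemma card_sh (f : pred P) s : #|[set p | f (sh p s)]| = #|[set p | f p]|.
Proof.
rewrite -[RHS](card_preimset _ (sh_inj (s:=s))); apply: eq_card => p; by rewrite !inE.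
Qed.

Lemma HW A : A \in C -> hweight A = 4.
Proof. move: HC => /andP [/forall_inP H _] /H /eqP //. Qed.

Lemma HCorr A B (r : 'I_v) : A \in C -> B \in C -> (A != B) || (r %% v != 0) -> corr A B r <= 2.
Proof. move: HC => /andP [_ /forall_inP H] /H /forall_inP H1 /H1 /forallP H2 /(implyP (H2 r)) //. Qed.

Lemma blk_size k : k \in blk -> #|[set p | inb p k]| = 4.
Proof.
case: k => A s; rewrite inE /= => AC.
rewrite -(HW AC) hweight_card -[RHS](card_sh _ s). by apply: eq_card => p; rewrite !inE.
Qed.

Lemma blk_inter k k' : k \in blk -> k' \in blk -> k != k' ->
  #|[set p | inb p k && inb p k']| <= 2.
Proof.
case: k => A s; case: k' => B t; rewrite !inE /= => AC BC kk.
have v0 : 0 < v by apply: (leq_ltn_trans (leq0n s) (ltn_ord s)).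
rewrite -(card_sh _ (v - s)).
set r := col_shift t (v - s).
have -> : #|[set p | inb (sh p (v - s)) (A, s) && inb (sh p (v - s)) (B, t)]| = corr A B r.
  rewrite corr_card; apply: eq_card => p; rewrite !inE /inb /= !cs_add.
  rewrite subnK ?(ltnW (ltn_ord s)) // cs_v.
  by rewrite /r cs_val cs_mod addnC.
apply: HCorr => //.
case: (eqVneq A B) => [eAB|] //=; subst B.
rewrite cs_val modn_mod.
have st : s != t by apply: contra kk => /eqP ->.
have st' : (s : nat) != t by []. clear st.
have sv := ltn_ord s; have tv := ltn_ord t.
case: (leqP s t) => hst.
  rewrite (_ : t + (v - s) = (t - s) + v); last by lia.
  rewrite modnDr modn_small; [lia|lia].
rewrite modn_small; lia.
Qed.


Definition Nx p := #|[set k in blk | inb p k]|.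
Definition lam p a := #|[set k in blk | inb p k && inb a k]|.
Definition tt p a y := #|[set k in blk | [&& inb p k, inb a k & inb y k]]|.

Lemma sum_blk k : k \in blk -> \sum_a (inb a k : nat) = 4.
Proof. move=> Hk; rewrite sumbP -(blk_size Hk); apply: eq_card => p; by rewrite !inE. Qed.

Lemma D1 : \sum_p Nx p = 4 * #|blk|.
Proof.
have E p : Nx p = \sum_(k in blk) (inb p k : nat) by rewrite sumbP.
rewrite (eq_bigr _ (fun p _ => E p)) exchange_big /=.
rewrite (eq_bigr (fun _ => 4)); last by move=> k Hk; rewrite sum_blk.
by rewrite sum_nat_const mulnC.
Qed.

Lemma D2 p : \sum_(a | a != p) lam p a = 3 * Nx p.
Proof.
have E a : lam p a = \sum_(k | (k \in blk) && inb p k) (inb a k : nat).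
  by rewrite sumbP; apply: eq_card => k; rewrite !inE andbA.
rewrite (eq_bigr _ (fun a _ => E a)) exchange_big /=.
rewrite (eq_bigr (fun _ => 3)); last first.
  move=> k /andP [Hk Hp]; have := sum_blk Hk; rewrite (bigD1 p) //= Hp /= => H; apply: (@addnI 1); exact: H.
rewrite (sum_constP (fun k => (k \in blk) && inb p k)) mulnC; congr (_ * _); apply: eq_card => k; by rewrite !inE.
Qed.

Lemma D3 p a : a != p -> 2 * lam p a = \sum_(y | (y != p) && (y != a)) tt p a y.
Proof.
move=> ap.
have E y : tt p a y = \sum_(k | (k \in blk) && inb p k && inb a k) (inb y k : nat).
  by rewrite sumbP; apply: eq_card => k; rewrite !inE !andbA.
rewrite (eq_bigr _ (fun a _ => E a)) exchange_big /=.
rewrite (eq_bigr (fun _ => 2)); last first.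
  move=> k /andP [/andP [Hk Hp] Ha]; have := sum_blk Hk; rewrite (bigD1 p) //= Hp /=.
  rewrite (bigD1 a) //= Ha /= => H; apply: (@addnI 2); exact: H.
rewrite (sum_constP (fun k => (k \in blk) && inb p k && inb a k)) mulnC; congr (_ * _); apply: eq_card => k; by rewrite !inE andbA.
Qed.

Lemma tt_le1 p a y : p != a -> p != y -> a != y -> tt p a y <= 1.
Proof.
move=> pa py ay; rewrite leqNgt; apply/negP => /card_gt1P [k1 [k2 [H1 H2 H12]]].
rewrite !inE in H1 H2.
move: H1 H2 => /andP [B1 /and3P [p1 a1 y1]] /andP [B2 /and3P[p2 a2 y2]].
have := blk_inter (k:=k1) (k':=k2); rewrite !inE B1 B2 => /(_ isT isT H12); apply/negP; rewrite -ltnNge.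
have sub : p |: (a |: [set y]) \subset [set q | inb q k1 && inb q k2].
  apply/subsetP => q; rewrite !inE => /or3P [] /eqP ->; apply/andP; split => //.
apply: leq_trans (subset_leq_card sub).
rewrite !cardsU1 cards1 !inE (negbTE pa) (negbTE py) (negbTE ay) //.
Qed.

Lemma ttC12 p a y : tt p a y = tt a p y.
Proof. apply: eq_card => k; rewrite !inE; by case (inb p k); case (inb a k). Qed.
Lemma ttC23 p a y : tt p a y = tt p y a.
Proof. apply: eq_card => k; rewrite !inE; by case (inb y k); case (inb a k). Qed.
Lemma lamC p a : lam p a = lam a p.
Proof. apply: eq_card => k; rewrite !inE; by case (inb p k); case (inb a k). Qed.

Definition gk (t : nat) (k : Kt) : Kt := (k.1, col_shift k.2 t).
Lemma gk_inj t : injective (gk t).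
Proof. move=> [A s] [B r] [-> /cs_inj ->] //. Qed.

Lemma inb_sh p t k : inb (sh p t) k = inb p (gk t k).
Proof. case: k => A s. by rewrite /inb /= cs_add cs_val cs_mod addnC. Qed.

Lemma tt_sh p a y t : tt (sh p t) (sh a t) (sh y t) = tt p a y.
Proof.
rewrite /tt -[RHS](card_preimset _ (gk_inj (t:=t))); apply: eq_card => k.
by rewrite !inE !inb_sh.
Qed.

Lemma lam_sh p a t : lam (sh p t) (sh a t) = lam p a.
Proof.
rewrite /lam -[RHS](card_preimset _ (gk_inj (t:=t))); apply: eq_card => k.
by rewrite !inE !inb_sh.
Qed.

Definition Y p a := [set y | [&& y != p, y != a & tt p a y == 0]].

Lemma cardP : #|[set: P]| = u * v.
Proof. by rewrite cardsT card_prod !card_ord. Qed.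

Lemma card2C p a : a != p -> #|[set y : P | (y != p) && (y != a)]| = u * v - 2.
Proof.
move=> ap; rewrite -cardP cardsT -(cardsC [set p; a]) cards2 eq_sym ap.
have -> : [set y : P | (y != p) && (y != a)] = ~: [set p; a].
  by apply/setP => y; rewrite !inE negb_or.
lia.
Qed.

Lemma cardY p a : a != p -> #|Y p a| + 2 * lam p a = u * v - 2.
Proof.
move=> ap; rewrite D3 //.
have -> : #|Y p a| = \sum_(y | (y != p) && (y != a)) (tt p a y == 0 : nat).
  rewrite sumbP; apply: eq_card => y; by rewrite !inE andbA.
rewrite -big_split /=.
rewrite (eq_bigr (fun _ => 1)); last first.
  move=> y /andP [yp ya]. have := tt_le1 (p:=p) (a:=a) (y:=y).
  rewrite eq_sym ap eq_sym yp eq_sym ya => /(_ isT isT isT).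
  by case: (tt p a y) => [|[|]].
rewrite (sum_constP (fun y => (y != p) && (y != a))) card2C //; lia.
Qed.

Section Anti.
Variables (h m : nat).
Hypothesis hh : h + h = v.
Hypothesis hn : u * v = 24 * m.
Hypothesis m0 : 0 < m.

Lemma v0 : 0 < v.
Proof.
case: v hn => [|w]; last by [].
by rewrite muln0; lia.
Qed.

Lemma sh_hh p : sh (sh p h) h = p.
Proof. case: p => i j; by rewrite sh_add hh /sh /= cs_v. Qed.

Lemma sh_eq p q : (sh p h == q) = (p == sh q h).
Proof.
apply/eqP/eqP => [<-|->]; by rewrite sh_hh.
Qed.

Lemma sh_neq p : sh p h != p.
Proof.
case: p => i j; rewrite /sh xpair_eqE eqxx /=; apply/negP => /eqP/(congr1 val).
rewrite cs_val => E0.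
have E : ((j:nat) + h) %% v = j by exact: E0.
clear E0.
have jv := ltn_ord j.
case: (ltnP (j + h) v) => H.
  move: E; rewrite modn_small //. have := v0. lia.
move: E; rewrite (_ : j + h = (j + h - v) + v); last by lia.
rewrite modnDr modn_small; [lia|lia].
Qed.

Lemma lam_even p : ~~ odd (lam p (sh p h)).
Proof.
set S := [set k in blk | inb p k && inb (sh p h) k].
have -> : lam p (sh p h) = #|S| by [].
set L := [set k : Kt | k.2 < h].
have gS k : k \in S -> gk h k \in S.
  rewrite !inE /= -!inb_sh sh_hh => /andP [-> /andP [-> ->]] //.
have gL1 k : k \in L -> gk h k \notin L.
  case: k => A s; rewrite !inE /= cs_val -leqNgt => H.
  have := ltn_ord s; move: H. move: (nat_of_ord s) => s' H1 H2.
  rewrite modn_small; lia.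
have gL2 k : k \notin L -> gk h k \in L.
  case: k => A s; rewrite !inE /= cs_val -leqNgt => H.
  have := ltn_ord s; move: H. move: (nat_of_ord s) => s' H H2.
  rewrite (_ : s' + h = (s' + h - v) + v); last by lia.
  rewrite modnDr modn_small; [lia|lia].
have c1 : #|S :&: L| <= #|S :\: L|.
  rewrite -(card_imset _ (gk_inj (t:=h))); apply: subset_leq_card.
  apply/subsetP => k' /imsetP [k]; rewrite in_setI => /andP [kS kL] ->.
  by rewrite in_setD gS // gL1.
have c2 : #|S :\: L| <= #|S :&: L|.
  rewrite -(card_imset _ (gk_inj (t:=h))); apply: subset_leq_card.
  apply/subsetP => k' /imsetP [k]; rewrite in_setD => /andP [kL kS] ->.
  by rewrite in_setI gS // gL2.
rewrite -(cardsID L S).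
have -> : #|S :\: L| = #|S :&: L| by apply/eqP; rewrite eqn_leq c1 c2.
by rewrite addnn odd_double.
Qed.

Definition e p := \sum_(a | a != p) #|Y p a|.
Definition D := 96 * (m * m) - 12 * m - 1.

Lemma Y_anti p : 2 <= #|Y p (sh p h)|.
Proof.
have := cardY (p:=p) (a:= sh p h) (sh_neq p).
have := lam_even p. have := odd_double_half (lam p (sh p h)).
move: (lam p (sh p h)) => l. move=> El /negbTE Ho. rewrite Ho add0n -muln2 in El.
rewrite -El. move: (l./2) => q. lia.
Qed.

Lemma cardC1P p : #|[set a : P | a != p]| = u * v - 1.
Proof.
have -> : [set a : P | a != p] = [set~ p] by apply/setP => a; rewrite !inE.
by rewrite cardsC1 card_prod !card_ord; lia.
Qed.

Lemma eN p : e p + 6 * Nx p = (u * v - 1) * (u * v - 2).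
Proof.
rewrite (_ : 6 = 2 * 3) // -mulnA -(D2 p) big_distrr /= -big_split /=.
rewrite (eq_bigr (fun _ => u * v - 2)); last by move=> a ap; rewrite cardY.
by rewrite sum_constP cardC1P.
Qed.

Lemma Ymem p a y : a != p -> y \in Y p a -> a \in Y p y.
Proof.
move=> ap; rewrite !inE => /and3P [yp ya t0].
by rewrite ap eq_sym ya -ttC23.
Qed.

Lemma Yeven p a : a != p -> ~~ odd #|Y p a|.
Proof.
move=> ap; have := cardY ap; move: (lam p a) (#|Y p a|) => l y E.
have -> : y = 2 * (12 * m - 1 - l) by lia.
by rewrite oddM.
Qed.

Lemma Ypos p a y : a != p -> y \in Y p a -> 2 <= #|Y p y|.
Proof.
move=> ap yY; have yp : y != p by move: yY; rewrite inE => /andP [].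
have := Yeven yp.
have : 0 < #|Y p y| by apply/card_gt0P; exists a; exact: Ymem.
by case: #|Y p y| => [|[|k]].
Qed.

Lemma K4 p a : a != p -> 3 * #|Y p a| <= e p.
Proof.
move=> ap; rewrite /e (bigD1 a) //=.
have H1 : \sum_(b in Y p a) 2 <= \sum_(b in Y p a) #|Y p b|.
  by apply: leq_sum => b bY; exact: (Ypos ap bY).
have H2 : \sum_(b in Y p a) #|Y p b| <= \sum_(b | (b != p) && (b != a)) #|Y p b|.
  apply: sum_subP => b; rewrite inE => /and3P [-> -> _] //.
move: H1 H2; rewrite sum_nat_const => A B; apply: (leq_trans _ (leq_add (leqnn _) (leq_trans A B))); move: (#|Y p a|) => y; rewrite /=; change (3 * y <= y + muln y 2); lia.
Qed.

Lemma mm : m <= m * m.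
Proof. by rewrite leq_pmull. Qed.

Lemma nn : (u * v - 1) * (u * v - 2) = 576 * (m * m) - 72 * m + 2.
Proof. rewrite hn. have := mm. nia. Qed.

Lemma Nbound p : Nx p <= D.
Proof.
have := eN p; have := K4 (sh_neq p); have := Y_anti p; rewrite nn /D.
have := mm. lia.
Qed.

Section Eq.
Hypothesis allEq : forall p, Nx p = D.

Lemma e8 p : e p = 8.
Proof. have := eN p; rewrite nn allEq /D. have := mm. lia. Qed.

Lemma Yle2 p a : a != p -> #|Y p a| <= 2.
Proof. move=> ap; have := K4 ap; rewrite e8; lia. Qed.

Lemma Y02 p a : a != p -> #|Y p a| = 2 * (0 < #|Y p a|).
Proof. move=> ap; have := Yle2 ap; have := Yeven ap. by case: #|Y p a| => [|[|[|k]]]. Qed.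

Definition T p := [set a | (a != p) && (0 < #|Y p a|)].

Lemma cardT p : #|T p| = 4.
Proof.
have := e8 p; rewrite /e (eq_bigr _ (fun a ap => Y02 ap)) -big_distrr /= sumbP.
rewrite -/(T p); move: #|T p| => t; change (muln 2 t = 8 -> t = 4); lia.
Qed.

Lemma YT p a y : a != p -> y \in Y p a -> (y \in T p) && (a \in T p).
Proof.
move=> ap yY; have yp : y != p by move: yY; rewrite inE => /andP [].
rewrite !inE ap yp /=; apply/andP; split; apply/card_gt0P.
  by exists a; exact: Ymem.
by exists y.
Qed.

Lemma noeq (x : P) : False.
Proof.
set x' := sh x h.
have xx : sh x' h = x := sh_hh x.
have x'x : x' != x := sh_neq x.
have : 0 < #|Y x x'| := leq_trans (isT : 0 < 2) (Y_anti x).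
case/card_gt0P => b bY.
have bY' := bY; rewrite inE in bY'; case/and3P: bY' => bx bx' /eqP tb.
set b' := sh b h.
have bb : sh b' h = b := sh_hh b.
have tb' : tt x x' b' = 0.
  have E := tt_sh x x' b h. by rewrite -/x' -/b' xx tb ttC12 in E.
have b'x : b' != x by rewrite /b' sh_eq.
have b'x' : b' != x' by rewrite /b' /x' sh_eq sh_hh.
have b'b : b' != b := sh_neq b.
have bY2 : b' \in Y x x' by rewrite inE b'x b'x' tb' eqxx.
have YE : Y x x' = [set b; b'].
  apply/eqP; rewrite eq_sym eqEcard; apply/andP; split.
    by apply/subsetP => z /set2P [] ->.
  by rewrite cards2 eq_sym b'b Yle2.
have /andP [bT x'T] := YT x'x bY.
have /andP [b'T _] := YT x'x bY2.
have : ~~ (T x \subset x' |: [set b; b']).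
  apply/negP => /subset_leq_card; rewrite cardT cardsU1 cards2.
  by case: (x' \notin _); case: (b != b').
case/subsetPn => c cT; rewrite in_setU1 in_set2 !negb_or => /and3P [cx' cb cb'].
have cT' := cT; rewrite inE in cT'; case/andP: cT' => cx cpos.
have TE : x' |: (b |: (b' |: [set c])) = T x.
  apply/eqP; rewrite eqEcard cardT; apply/andP; split.
    apply/subsetP => w; rewrite !in_setU1 in_set1.
    by case/or4P => /eqP ->.
  rewrite card4 //; rewrite eq_sym //.
have cpos2 : #|Y x c| = 2 by rewrite (Y02 cx) cpos.
have YcE : Y x c = [set b; b'].
  apply/eqP; rewrite eqEcard cards2 eq_sym b'b cpos2 leqnn andbT.
  apply/subsetP => z zY.
  have /andP [zT _] := YT cx zY.
  have zY' := zY; rewrite inE in zY'; case/and3P: zY' => zx zc /eqP tz.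
  rewrite -TE !in_setU1 in_set1 in zT.
  case/or4P: zT => /eqP zE.
  - rewrite zE in tz.
    have : c \in Y x x' by rewrite inE cx cx' ttC23 tz eqxx.
    by rewrite YE in_set2 (negbTE cb) (negbTE cb').
  - by rewrite zE in_set2 eqxx.
  - by rewrite zE in_set2 eqxx orbT.
  - by rewrite zE eqxx in zc.
have : b \in Y x c by rewrite YcE in_set2 eqxx.
rewrite inE => /and3P [_ _ /eqP tcb].
have : b' \in Y x c by rewrite YcE in_set2 eqxx orbT.
rewrite inE => /and3P [_ _ /eqP tcb'].
set c' := sh c h.
have tc'b : tt x' c' b = 0.
  have E := tt_sh x c b' h. by rewrite -/x' -/c' bb tcb' in E.
have x'b : x' != b by rewrite eq_sym.
have xb : x != b by rewrite eq_sym.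
have xx'n : x != x' by rewrite eq_sym.
have xc : x != c by rewrite eq_sym.
have x'c' : x' != c' by rewrite /x' /c' sh_eq sh_hh.
have c'b : c' != b by rewrite /c' sh_eq.
have xYb : x' \in Y b x by rewrite inE x'b x'x ttC12 ttC23 tb.
have /andP [_ xTb] := YT xb xYb.
have x'Yb : x \in Y b x' by rewrite inE xb xx'n ttC23 ttC12 ttC23 tb.
have /andP [_ x'Tb] := YT x'b x'Yb.
have b'Tb : b' \in T b by rewrite inE b'b (leq_trans _ (Y_anti b)).
have cYb : x \in Y b c by rewrite inE xb xc ttC23 ttC12 ttC23 tcb.
have /andP [_ cTb] := YT cb cYb.
have c'Yb : x' \in Y b c' by rewrite inE x'b x'c' ttC23 ttC12 ttC23 tc'b.
have /andP [_ c'Tb] := YT c'b c'Yb.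
have sub : x |: (x' |: (b' |: (c |: [set c']))) \subset T b.
  by apply/subsetP => w; rewrite !in_setU1 in_set1; case/orP => [/eqP -> // | /or4P [] /eqP -> //].
have xb' : x != b' by rewrite eq_sym.
have xc' : x != c' by rewrite /c' eq_sym sh_eq.
have x'b' : x' != b' by rewrite eq_sym.
have x'c : x' != c by rewrite eq_sym.
have b'c : b' != c by rewrite eq_sym.
have b'c' : b' != c' by rewrite /b' /c' sh_eq sh_hh eq_sym.
have cc' : c != c' by rewrite eq_sym /c' sh_neq.
have := subset_leq_card sub; rewrite cardT card5 //.
Qed.

End Eq.

End Anti.

End Code.

Lemma sum_lt (T : finType) (F : T -> nat) c p :
  (forall q, F q <= c) -> F p < c -> \sum_q F q < \sum_(q : T) c.
Proof.
move=> H Hp; rewrite (bigD1 p) //= [X in _ < X](bigD1 p) //= -addSn.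
apply: leq_add => //; apply: leq_sum => q _; exact: H.
Qed.

Theorem lemma5p2 (u v : nat) :
  0 < u -> u %% 12 = 0 -> (v %% 6 = 2 \/ v %% 6 = 4) ->
  Phi u v <=
    (u * (((u * v - 1) * ((u * v - 2) %/ 2)) %/ 3 - 1)) %/ 4 - 1.
Proof.
move=> u0 u12 v6.
have ua : u = 12 * (u %/ 12) by lia.
have vw : v = 2 * (v %/ 2) by lia.
move: (u %/ 12) (v %/ 2) ua vw => a w ua vw.
have a0 : 0 < a by lia.
have w0 : 0 < w by case: v6 => H; lia.
have hn : u * v = 24 * (a * w) by rewrite ua vw; nia.
have m0 : 0 < a * w by rewrite muln_gt0 a0 w0.
have hh : w + w = v by lia.
move: (a * w) hn m0 => m hn m0.
have E1 : (u * v - 2) %/ 2 = 12 * m - 1.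
  rewrite hn (_ : 24 * m - 2 = (12 * m - 1) * 2); last by lia.
  by rewrite mulnK.
have E2 : (u * v - 1) * (12 * m - 1) = (96 * (m * m) - 12 * m) * 3 + 1.
  rewrite hn; nia.
have E3 : u * ((96 * (m * m) - 12 * m) - 1) = (3 * (a * D m)) * 4.
  rewrite ua /D; nia.
rewrite E1 E2 (divnMDl _ _ (isT : 0 < 3)) (divn_small (isT : 1 < 3)) addn0 E3 (mulnK _ (isT : 0 < 4)).
apply/bigmax_leqP => C HC.
have cb : #|blk C| = #|C| * v.
  have -> : blk C = setX C [set: 'I_v] by apply/setP => k; rewrite !inE andbT.
  by rewrite cardsX cardsT card_ord.
have v0 : 0 < v by lia.
have x : P u v by split; [exact: (Ordinal u0) | exact: (Ordinal v0)].
have Hlt : \sum_p Nx C p < \sum_(p : P u v) D m.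
  have Hle : forall p, Nx C p <= D m := Nbound HC hh hn m0.
  case: (boolP [forall p, Nx C p == D m]) => [/forallP Hall | /forallPn [p Hp]].
    exfalso; apply: (noeq HC hh hn m0 _ x) => p; exact/eqP.
  apply: (sum_lt Hle); rewrite ltn_neqAle Hle andbT; exact: Hp.
rewrite (D1 HC) cb (sum_constP (fun _ => true)) in Hlt.
have E4 : #|[set _ : P u v | true]| = u * v.
  by rewrite -(cardP u v); apply: eq_card => p; rewrite !inE.
move: Hlt; rewrite E4; move: (D m) (#|C|) => d c; rewrite ua.
change (muln 4 (muln c v) < muln (muln (muln 12 a) v) d -> c <= muln 3 (muln a d) - 1).
move=> H.
have H' : v * (4 * c) < v * (12 * (a * d)).
  move: H; rewrite !mulnA; lia.
move: H'; rewrite ltn_pmul2l //; move: (a * d) => z; lia.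
Qed.
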